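(* Let $G$ be a finite group and $S$ one of the Janko groups $J_1, J_2, J_3, J_4$. If $|G| = |S|$, then $G$ is neither a Frobenius group nor a 2-Frobenius group.
   Context: A finite group $G$ is a 2-Frobenius group if it has a normal series $1 \trianglelefteq A \trianglelefteq B \trianglelefteq G$ such that $B$ is a Frobenius group with Frobenius kernel $A$ and $G/A$ is a Frobenius group with Frobenius kernel $B/A$. Orders: $|J_1|=2^3\cdot3\cdot5\cdot7\cdot11\cdot19$, $|J_2|=2^7\cdot3^3\cdot5^2\cdot7$, $|J_3|=2^7\cdot3^5\cdot5\cdot17\cdot19$, $|J_4|=2^{21}\cdot3^3\cdot5\cdot7\cdot11^3\cdot23\cdot29\cdot31\cdot37\cdot43$. *)

(* Defs.v *)
From mathcomp Require Import all_boot all_order all_fingroup all_solvable.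
Set Implicit Arguments. Unset Strict Implicit. Unset Printing Implicit Defensive.
Local Open Scope group_scope.

(* G is a 2-Frobenius group: there is a normal series 1 <| A <| B <| G
   (A, B normal in G, so that G/A makes sense) such that B is a Frobenius
   group with kernel A and G/A is a Frobenius group with kernel B/A. *)
Definition two_Frobenius_group (gT : finGroupType) (G : {group gT}) : Prop :=
  exists (A B : {group gT}),
    [/\ A <| B, B <| G, A <| G,
        [Frobenius B with kernel A]
      & [Frobenius (G / A) with kernel (B / A)]].

Definition order_J1 : nat := 2^3 * 3 * 5 * 7 * 11 * 19.
Definition order_J2 : nat := 2^7 * 3^3 * 5^2 * 7.
Definition order_J3 : nat := 2^7 * 3^5 * 5 * 17 * 19.
Definition order_J4 : nat :=
  2^21 * 3^3 * 5 * 7 * 11^3 * 23 * 29 * 31 * 37 * 43.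

(* Main.v *)
Require Import Defs.
From mathcomp Require Import all_boot all_order all_fingroup all_solvable.
From mathcomp Require Import vcharacter.
Set Implicit Arguments. Unset Strict Implicit. Unset Printing Implicit Defensive.

Section Num.
Local Open Scope nat_scope.

Fixpoint prodv (qs xs : seq nat) : nat :=
  match qs, xs with q :: qs', x :: xs' => q ^ x * prodv qs' xs' | _, _ => 1 end.

Fixpoint lk (qs es : seq nat) (r : nat) : nat :=
  match qs, es with q :: qs', e :: es' => if r == q then e else lk qs' es' r | _, _ => 0 end.

Fixpoint cprod (ls : seq (seq nat)) : seq (seq nat) :=
  match ls with
  | [::] => [:: [::]]
  | l :: ls' => [seq x :: v | x <- l, v <- cprod ls']
  end.

Fixpoint allin (xs : seq nat) (ls : seq (seq nat)) : bool :=
  match xs, ls with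
  | [::], [::] => true
  | x :: xs', l :: ls' => (x \in l) && allin xs' ls'
  | _, _ => false
  end.

Lemma cprod_mem xs ls : allin xs ls -> xs \in cprod ls.
Proof.
elim: ls xs => [|l ls IH] [|x xs] //= /andP[xl /IH H].
by apply: allpairs_f.
Qed.

Fixpoint mapz (F : nat -> nat -> nat -> seq nat) (qs es ws : seq nat) : seq (seq nat) :=
  match qs, es, ws with
  | q :: qs', e :: es', w :: ws' => F q e w :: mapz F qs' es' ws'
  | _, _, _ => [::]
  end.

Lemma allin_mapz F (f : nat -> nat) qs es ws :
  uniq qs -> size es = size qs -> size ws = size qs ->
  (forall q, q \in qs -> f q \in F q (lk qs es q) (lk qs ws q)) ->
  allin (map f qs) (mapz F qs es ws).
Proof.
elim: qs es ws => [|q qs IH] [|e es] [|w ws] //= /andP[qnq uq] [sz] [sw] H.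
rewrite IH //.
  by have := H q; rewrite eqxx mem_head => ->.
move=> r rq; have rq' : r \in q :: qs by rewrite in_cons rq orbT.
have := H r rq'; case: eqP => [Erq | _] //.
by move: qnq; rewrite -Erq rq.
Qed.

Fixpoint vl (q m e : nat) : nat :=
  match e with
  | 0 => 0
  | e'.+1 => if q %| m then (vl q (m %/ q) e').+1 else 0
  end.

Definition xlists qs es m :=
  mapz (fun q e _ => iota 0 (vl q m e).+1) qs es qs.

Definition zlists qs es xs t :=
  mapz (fun q e x => iota 0 (vl q t (e - x)).+1) qs es xs.

Definition pm (q y d : nat) : nat := iter y (fun a => (a * q) %% d) (1 %% d).

Fixpoint ysof (es xs zs : seq nat) : seq nat :=
  match es, xs, zs with
  | e :: es', x :: xs', z :: zs' => (e - x - z) :: ysof es' xs' zs'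
  | _, _, _ => [::]
  end.

Fixpoint tvl (qs xs : seq nat) : nat :=
  match qs, xs with
  | q :: qs', x :: xs' => if 0 < x then q ^ x - 1 else tvl qs' xs'
  | _, _ => 0
  end.

Fixpoint okP (qs ys : seq nat) (d : nat) : bool :=
  match qs, ys with
  | q :: qs', y :: ys' =>
      if y == 0 then okP qs' ys' d else
      if pm q y d == 1 %% d then okP qs' ys' d else false
  | _, _ => true
  end.

Definition sol qs es xs zs :=
  let hv := prodv qs xs in let cv := prodv qs zs in
  let ys := ysof es xs zs in
  if 1 < hv then if has (leq 1) ys then if okP qs ys hv then
     if cv == 1 then true else okP qs xs cv
  else false else false else false.

Definition checkall (qs es : seq nat) : bool :=
  all (fun qe => all (fun y0 =>
       let m := qe.1 ^ y0 - 1 in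
       all (fun xs => if prodv qs xs <= 1 then true else all (fun zs => ~~ sol qs es xs zs)
                          (cprod (zlists qs es xs (tvl qs xs))))
           (cprod (xlists qs es m)))
     (iota 1 qe.2)) (zip qs es).

Lemma check_J1 : checkall [:: 2; 3; 5; 7; 11; 19] [:: 3; 1; 1; 1; 1; 1].
Proof. vm_compute. reflexivity. Qed.
Lemma check_J2 : checkall [:: 2; 3; 5; 7] [:: 7; 3; 2; 1].
Proof. vm_compute. reflexivity. Qed.
Lemma check_J3 : checkall [:: 2; 3; 5; 17; 19] [:: 7; 5; 1; 1; 1].
Proof. vm_compute. reflexivity. Qed.
Lemma check_J4 : checkall [:: 2; 3; 5; 7; 11; 23; 29; 31; 37; 43] [:: 21; 3; 1; 1; 3; 1; 1; 1; 1; 1].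
Proof. vm_compute. reflexivity. Qed.


Lemma prodv_gt0 qs xs : all prime qs -> 0 < prodv qs xs.
Proof.
elim: qs xs => [|q qs IH] [|x xs] //= /andP[pq aq].
by rewrite muln_gt0 expn_gt0 prime_gt0 // IH.
Qed.

Lemma lk_notin qs es r : r \notin qs -> lk qs es r = 0.
Proof.
elim: qs es => [|q qs IH] [|e es] //=; rewrite in_cons negb_or => /andP[/negbTE -> ?].
exact: IH.
Qed.

Lemma lk_map qs (g : nat -> nat) r : r \in qs -> lk qs (map g qs) r = g r.
Proof.
elim: qs => [|q qs IH] //=; rewrite in_cons.
by case: eqP => [-> //| _] /= /IH.
Qed.

Lemma lk_id qs r : r \in qs -> lk qs qs r = r.
Proof. by move=> rq; rewrite -{2}(map_id qs) lk_map. Qed.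

Lemma logn_prodv qs es r : prime r -> all prime qs -> uniq qs ->
  logn r (prodv qs es) = lk qs es r.
Proof.
move=> pr; elim: qs es => [|q qs IH] [|e es] //=; try by rewrite logn1.
case/andP=> pq aq /andP[qnq uq].
rewrite lognM ?expn_gt0 ?prodv_gt0 ?prime_gt0 // lognX logn_prime //.
case: eqP => [Erq | _]; last by rewrite muln0 add0n IH.
by rewrite muln1 IH // lk_notin ?addn0 // Erq.
Qed.

Lemma lk_zip qs es r : size es = size qs -> r \in qs -> (r, lk qs es r) \in zip qs es.
Proof.
elim: qs es => [|q qs IH] [|e es] //= [sz]; rewrite in_cons.
case: eqP => [-> _ | _ /= rq]; first by rewrite mem_head.
by rewrite in_cons IH ?orbT.
Qed.

Lemma prodv_logn qs h : uniq qs -> all prime qs -> 0 < h ->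
  (forall r, prime r -> r %| h -> r \in qs) ->
  h = prodv qs [seq logn q h | q <- qs].
Proof.
elim: qs h => [|q qs IH] h /=.
  move=> _ _ h0 H; apply/eqP; rewrite eqn_leq h0 andbT leqNgt; apply/negP => h1.
  by have := H _ (pdiv_prime h1) (pdiv_dvd h); rewrite in_nil.
case/andP=> qnq uq /andP[pq aq] h0 H.
have [m cqm defh] := pfactor_coprime pq h0.
have m0 : 0 < m by move: h0; rewrite defh muln_gt0 => /andP[].
have Em r : r \in qs -> logn r h = logn r m.
  move=> rq; rewrite {1}defh (@lognM r m _ m0) ?expn_gt0 ?prime_gt0 // lognX.
  rewrite (logn_prime _ pq); case: (r =P q) => [Erq|_]; last by rewrite muln0 addn0.
  by move: qnq; rewrite -Erq rq.
rewrite (iffLR (eq_in_map _ _ qs) Em) -IH //.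
  by rewrite mulnC -defh.
move=> r pr rm; have : r \in q :: qs by apply: H => //; rewrite defh dvdn_mulr.
rewrite in_cons => /orP[/eqP Erq|//].
by move: cqm; rewrite -Erq prime_coprime // rm.
Qed.

Lemma vl_ge q m e x : 1 < q -> x <= e -> q ^ x %| m -> x <= vl q m e.
Proof.
move=> q1; elim: e x m => [|e IH] [|x] m //= xe dm.
have qm : q %| m by apply: dvdn_trans dm; rewrite expnS dvdn_mulr.
rewrite qm ltnS IH //.
have q0 : 0 < q by apply: ltnW.
move: dm; rewrite -{1}(divnK qm) expnS mulnC dvdn_pmul2r //.
Qed.

Lemma pm_mod q y d : pm q y d = q ^ y %% d.
Proof.
elim: y => [|y IH] /=; first by rewrite expn0.
by rewrite /pm /= -/(pm q y d) IH modnMml expnSr.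
Qed.

Lemma okP_map qs (y : nat -> nat) d : all prime qs ->
  (forall q, q \in qs -> 0 < y q -> d %| q ^ y q - 1) -> okP qs (map y qs) d.
Proof.
elim: qs => [|q qs IH] //= /andP[pq aq] H.
have IH' : okP qs (map y qs) d by apply: IH => // r rq; apply: H; rewrite in_cons rq orbT.
case: eqP => [//|/eqP]; rewrite -lt0n => yq.
rewrite pm_mod; have := H q (mem_head _ _) yq.
rewrite -eqn_mod_dvd ?expn_gt0 ?prime_gt0 // => ->.
exact: IH'.
Qed.

Lemma ysof_map qs es (f g y : nat -> nat) : uniq qs -> size es = size qs ->
  (forall q, q \in qs -> lk qs es q - f q - g q = y q) ->
  ysof es (map f qs) (map g qs) = map y qs.
Proof.
elim: qs es => [|q qs IH] [|e es] //= /andP[qnq uq] [sz] H.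
have := H q (mem_head _ _); rewrite eqxx => ->; congr (_ :: _).
apply: IH => // r rq; have := H r; rewrite in_cons rq orbT => /(_ isT).
case: (r =P q) => [Erq|//]; by move: qnq; rewrite -Erq rq.
Qed.

Lemma tval_dvd qs (f : nat -> nat) d :
  (forall q, q \in qs -> 0 < f q -> d %| q ^ f q - 1) -> d %| tvl qs (map f qs).
Proof.
elim: qs => [|q qs IH] /= H; first exact: dvdn0.
case: ifP => [fq|_]; first exact: H (mem_head _ _) fq.
by apply: IH => r rq; apply: H; rewrite in_cons rq orbT.
Qed.

Lemma nosol qs es h k c : all prime qs -> uniq qs -> size es = size qs ->
  checkall qs es -> k * h * c = prodv qs es -> 1 < h -> 1 < k ->
  (forall p, prime p -> h %| (k`_p).-1) ->
  (c = 1 \/ forall q, prime q -> c %| (h`_q).-1) -> False.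
Proof.
move=> aq uq sz chk defn h1 k1 HA HB.
have n0 := prodv_gt0 es aq.
have h0 : 0 < h by apply: ltnW.
have k0 : 0 < k by apply: ltnW.
have c0 : 0 < c by move: n0; rewrite -defn muln_gt0 => /andP[].
have Hsum r : prime r -> lk qs es r = logn r k + logn r h + logn r c.
  move=> pr; rewrite -logn_prodv // -defn !lognM // ?muln_gt0 ?k0 //.
have Hin r : prime r -> 0 < lk qs es r -> r \in qs.
  by move=> pr; apply: contraLR => /lk_notin ->.
have inq d r : prime r -> r %| d -> 0 < d -> d %| prodv qs es -> r \in qs.
  move=> pr rd d0 dn; apply: Hin => //; rewrite -logn_prodv //.
  apply: leq_trans (dvdn_leq_log _ _ dn); first by rewrite logn_gt0 mem_primes pr d0 rd.
  exact: prodv_gt0.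
have dh : h %| prodv qs es by rewrite -defn; apply/dvdn_mulr/dvdn_mull.
have dk : k %| prodv qs es by rewrite -defn; apply/dvdn_mulr/dvdn_mulr.
have dc : c %| prodv qs es by rewrite -defn; apply/dvdn_mull.
set p0 := pdiv k.
have pp0 : prime p0 := pdiv_prime k1.
have p0k : p0 %| k := pdiv_dvd k.
have y0pos : 0 < logn p0 k by rewrite logn_gt0 mem_primes pp0 k0 p0k.
have p0q : p0 \in qs := inq k p0 pp0 p0k k0 dk.
set y0 := logn p0 k.
have Hz : (p0, lk qs es p0) \in zip qs es := lk_zip sz p0q.
have Hy : y0 \in iota 1 (lk qs es p0).
  by rewrite mem_iota y0pos /= add1n ltnS (Hsum _ pp0) -addnA leq_addr.
have hm : h %| p0 ^ y0 - 1 by rewrite subn1 -p_part; exact: HA.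
set xs := [seq logn q h | q <- qs].
have hv : prodv qs xs = h.
  by rewrite -prodv_logn // => r pr rh; exact: inq h r pr rh h0 dh.
have cv : prodv qs [seq logn q c | q <- qs] = c.
  by rewrite -prodv_logn // => r pr rc; exact: inq c r pr rc c0 dc.
have prq q : q \in qs -> prime q by move=> qq; exact: (allP aq).
have Hxs : xs \in cprod (xlists qs es (p0 ^ y0 - 1)).
  apply: cprod_mem; apply: allin_mapz => //.
  move=> q qq; rewrite mem_iota /= add0n ltnS; apply: vl_ge.
  - exact: prime_gt1 (prq q qq).
  - by rewrite (Hsum _ (prq q qq)) addnAC leq_addl.
  - by apply: dvdn_trans hm; rewrite -p_part dvdn_part.
have ct : c %| tvl qs xs.
  case: HB => [-> | HB]; first exact: dvd1n.
  apply: tval_dvd => q qq _; rewrite subn1 -p_part; exact: HB (prq q qq).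
set zs := [seq logn q c | q <- qs].
have Hzs : zs \in cprod (zlists qs es xs (tvl qs xs)).
  apply: cprod_mem; apply: allin_mapz => //; first by rewrite size_map.
  move=> q qq; rewrite mem_iota /= add0n ltnS lk_map //; apply: vl_ge.
  - exact: prime_gt1 (prq q qq).
  - by rewrite (Hsum _ (prq q qq)) addnAC addnK leq_addl.
  - by apply: dvdn_trans ct; rewrite -p_part dvdn_part.
have Hsol : sol qs es xs zs.
  have ys : ysof es xs zs = [seq logn q k | q <- qs].
    apply: ysof_map => // q qq; rewrite (Hsum _ (prq q qq)).
    by rewrite -subnDA -addnA addnK.
  rewrite /sol hv cv ys h1 /=.
  have -> : has (leq 1) [seq logn q k | q <- qs].
    by apply/hasP; exists y0 => //; apply: map_f.
  have -> : okP qs [seq logn q k | q <- qs] h.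
    apply: okP_map => // q qq _; rewrite subn1 -p_part; exact: HA (prq q qq).
  case: HB => [-> //| HB]; case: (c == 1) => //.
  apply: okP_map => // q qq _; rewrite subn1 -p_part; exact: HB (prq q qq).
move: chk => /allP/(_ _ Hz)/allP/(_ _ Hy) /= /allP/(_ _ Hxs).
rewrite hv leqNgt h1 /= => /allP/(_ _ Hzs).
by rewrite Hsol.
Qed.

End Num.


Lemma eJ1 : order_J1 = prodv [:: 2; 3; 5; 7; 11; 19] [:: 3; 1; 1; 1; 1; 1].
Proof. rewrite /order_J1 [prodv _ _]/= !expn1 !muln1. move: (2^3) => a. by rewrite !mulnA. Qed.
Lemma eJ2 : order_J2 = prodv [:: 2; 3; 5; 7] [:: 7; 3; 2; 1].
Proof. rewrite /order_J2 [prodv _ _]/= !expn1 !muln1. move: (2^7) (3^3) (5^2) => a b c. by rewrite !mulnA. Qed.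
Lemma eJ3 : order_J3 = prodv [:: 2; 3; 5; 17; 19] [:: 7; 5; 1; 1; 1].
Proof. rewrite /order_J3 [prodv _ _]/= !expn1 !muln1. move: (2^7) (3^5) => a b. by rewrite !mulnA. Qed.
Lemma eJ4 : order_J4 = prodv [:: 2; 3; 5; 7; 11; 23; 29; 31; 37; 43] [:: 21; 3; 1; 1; 3; 1; 1; 1; 1; 1].
Proof. rewrite /order_J4 [prodv _ _]/= !expn1 !muln1. move: (2^21) (3^3) (11^3) => a b c. by rewrite !mulnA. Qed.

Definition Bad (n : nat) := forall h k c, k * h * c = n -> 1 < h -> 1 < k ->
  (forall p, prime p -> h %| (k`_p).-1) ->
  (c = 1 \/ forall q, prime q -> c %| (h`_q).-1) -> False.

Lemma badJ n : [\/ n = order_J1, n = order_J2, n = order_J3 | n = order_J4] -> Bad n.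
Proof.
case=> -> h k c hkc.
- rewrite eJ1 in hkc; apply: (nosol _ _ _ check_J1 hkc); by vm_compute.
- rewrite eJ2 in hkc; apply: (nosol _ _ _ check_J2 hkc); by vm_compute.
- rewrite eJ3 in hkc; apply: (nosol _ _ _ check_J3 hkc); by vm_compute.
- rewrite eJ4 in hkc; apply: (nosol _ _ _ check_J4 hkc); by vm_compute.
Qed.

Section Grp.
Local Open Scope group_scope.

Lemma frob_sylow (gT : finGroupType) (G K : {group gT}) p :
  [Frobenius G with kernel K] -> prime p -> (#|G : K| %| (#|K|`_p).-1)%N.
Proof.
move=> frobGK pr_p.
have [ntK ltKG nsKG regK] := Frobenius_kerP frobGK.
have [sKG nKG] := andP nsKG.
have [P sylP] := Sylow_exists p K.
rewrite -(card_Hall sylP).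
have [-> | ntP] := eqVneq P 1%G.
  by rewrite cards1 dvdn0.
have sPK : P \subset K := pHall_sub sylP.
set N := 'N_G(P).
have defG : K * N = G := Frattini_arg nsKG sylP.
have sNG : N \subset G by rewrite subsetIl.
have sPN : P \subset N by rewrite subsetI (subset_trans sPK sKG) normG.
have nsMN : N :&: K <| N := normalGI sNG nsKG.
have frobN : [Frobenius N with kernel (N :&: K)].
  apply/Frobenius_kerP; split => //.
  - apply: contraNneq ntP => M1; apply/eqP; apply: val_inj; apply/trivgP.
    by rewrite -M1 subsetI sPN.
  - rewrite properEneq subsetIl andbT; apply: contraNneq (proper_subn ltKG).
    move=> eqM; rewrite -defG mul_subG //.
    rewrite /N -{1}eqM.
    by rewrite subsetIr.
  - move=> x /setD1P[ntx /setIP[_ Kx]].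
    rewrite subsetI subsetIl /= (subset_trans _ (regK x _)) ?setSI //.
    by rewrite !inE ntx.
have [H frobNH] := existsP frobN.
have regMH := Frobenius_reg_ker frobNH.
have [defN _ _ _ _] := Frobenius_context frobNH.
have [_ sHN _ _] := sdprodP defN.
have -> : #|G : K| = #|H|.
  rewrite -defG indexMg -indexgI.
  have := sdprod_card defN; rewrite -(Lagrange (subsetIl N K)) => /eqP.
  by rewrite eqn_pmul2l ?cardG_gt0 // => /eqP.
apply: regular_norm_dvd_pred.
  have [_ /mulG_sub[_ sHN'] _ _] := sdprodP defN.
  by rewrite (subset_trans sHN') // subsetIr.
apply: semiregularS regMH => //.
by rewrite subsetI sPN.
Qed.


Lemma bad_groups (gT : finGroupType) (G : {group gT}) :
  Bad #|G| -> ~ Frobenius_group G /\ ~ two_Frobenius_group G.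
Proof.
rewrite /Bad => bad; split.
  case/existsP=> H frobH.
  have [K frobK] := Frobenius_kernel_exists frobH.
  have frobGK := FrobeniusWker frobK.
  have [ntK ltKG nsKG _] := Frobenius_kerP frobGK.
  apply: (bad #|G : K| #|K| 1%N).
  - by rewrite muln1 Lagrange // proper_sub.
  - by rewrite indexg_gt1 proper_subn.
  - by rewrite cardG_gt1.
  - by move=> p pp; apply: frob_sylow.
  - by left.
case=> A [B [nsAB nsBG nsAG frobB frobQ]].
have [ntA ltAB _ _] := Frobenius_kerP frobB.
have sAB := proper_sub ltAB.
have [sBG _] := andP nsBG.
have [_ nAG] := andP nsAG.
apply: (bad #|B : A| #|A| #|G : B|).
- by rewrite Lagrange // Lagrange.
- by rewrite indexg_gt1 proper_subn.
- by rewrite cardG_gt1.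
- by move=> p pp; apply: frob_sylow.
right=> q pq; have := frob_sylow frobQ pq.
rewrite index_quotient_eq ?card_quotient //.
- exact: subset_trans nAG.
- exact: subset_trans (subsetIr _ _) sAB.
Qed.
End Grp.

Theorem lemma2p9 (gT : finGroupType) (G : {group gT}) :
  [\/ #|G| = order_J1, #|G| = order_J2, #|G| = order_J3 | #|G| = order_J4] ->
  ~ Frobenius_group G /\ ~ two_Frobenius_group G.
Proof. by move=> H; apply: bad_groups; apply: badJ. Qed.
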